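(* Let $k\ge2$, $\varepsilon>0$, and let $r$ be a multiple of $k$ with $r\ge 6/\varepsilon$. Let $R$ be a graph on $[r]$ with $\delta(R)\ge(1-\frac1k+\varepsilon)r$, and let $Q$ be a $K_k$-factor of $R$ consisting of the vertex-disjoint cliques $Q^1,\dots,Q^{r/k}$. Let $D$ be the directed graph on $[r]$ with arc set $\{\overrightarrow{ij}: i\ne j\in[r],\ N_Q(j)\subseteq N_R(i)\}$. Then there exist at least two indices $s\in[r/k]$ such that for every $j\in V(Q^s)$ and every $i\in[r]\setminus\{j\}$ there is a directed path from $i$ to $j$ in $D$.
   Context: $N_Q(j)$ denotes the neighbourhood of $j$ in $Q$ (the other $k-1$ vertices of the clique of $Q$ containing $j$), and $N_R(i)$ the neighbourhood of $i$ in $R$. A $K_k$-factor of $R$ is a spanning subgraph consisting of vertex-disjoint copies of $K_k$. *)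

(* Defs.v *)
From mathcomp Require Import all_boot all_order all_algebra.
Set Implicit Arguments. Unset Strict Implicit. Unset Printing Implicit Defensive.

Definition simple_graph (n : nat) (E : rel 'I_n) : Prop :=
  (forall i j, E i j = E j i) /\ (forall i, E i i = false).

Definition nbhd (n : nat) (E : rel 'I_n) (i : 'I_n) : {set 'I_n} := [set j | E i j].

(* A K_k-factor Q of E, given by the map q sending each vertex to the index
   s of the clique Q^s containing it (indices in 'I_(n %/ k), i.e. [n/k]):
   every class has exactly k vertices, and any two distinct vertices in the
   same class are adjacent in E (so each Q^s is a copy of K_k in E). *)
Definition is_Kk_factor (n k : nat) (E : rel 'I_n) (q : 'I_n -> 'I_(n %/ k)) : Prop :=
  (forall s, #|[set j | q j == s]| = k) /\
  (forall i j, i != j -> q i = q j -> E i j).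

Definition NQ (n k : nat) (q : 'I_n -> 'I_(n %/ k)) (j : 'I_n) : {set 'I_n} :=
  [set j' | (j' != j) && (q j' == q j)].

Definition Darc (n k : nat) (E : rel 'I_n) (q : 'I_n -> 'I_(n %/ k)) : rel 'I_n :=
  fun i j => (i != j) && (NQ q j \subset nbhd E i).

(* Main.v *)
Require Import Defs.
From mathcomp Require Import all_boot all_order all_algebra.
From mathcomp Require Import zify ring lra.
Import Order.TTheory GRing.Theory Num.Theory.
Set Implicit Arguments. Unset Strict Implicit.

Section NatPart.
Variables (r k : nat) (R : rel 'I_r) (q : 'I_r -> 'I_(r %/ k)).
Hypothesis Hk : 2 <= k.
Hypothesis HR : simple_graph R.
Hypothesis HQ : @is_Kk_factor r k R q.

Definition Ns i s := [set j | R i j && (q j == s)].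
Definition Kc s := [set j | q j == s].
Definition full i s := [forall j, (q j == s) ==> R i j].
Definition wt i s := (full i s : nat) + (k.-1 <= #|Ns i s|).

Lemma cardK s : #|Kc s| = k.
Proof. by case: HQ => H _; apply: H. Qed.

Lemma Ns_sub i s : Ns i s \subset Kc s.
Proof. by apply/subsetP => j; rewrite !inE => /andP[]. Qed.

Lemma Ns_le i s : #|Ns i s| <= k.
Proof. by rewrite -(cardK s) subset_leq_card // Ns_sub. Qed.

Lemma full_card i s : full i s -> #|Ns i s| = k.
Proof.
move=> /forallP Hf; apply/eqP; rewrite eqn_leq Ns_le /= -{1}(cardK s).
apply: subset_leq_card; apply/subsetP => j; rewrite !inE => Hj.
by rewrite (implyP (Hf j) Hj) Hj.
Qed.

Lemma notfull_card i s : ~~ full i s -> #|Ns i s| <= k.-1.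
Proof.
move=> /forallPn[j0]; rewrite negb_imply => /andP[Hq Hr].
have : Ns i s \subset Kc s :\ j0.
  apply/subsetP => j; rewrite !inE => /andP[Hij ->]; rewrite andbT.
  by apply: contraTneq Hij => ->.
move/subset_leq_card; have := cardsD1 j0 (Kc s); rewrite cardK inE Hq /=.
move=> H1 H2; lia.
Qed.

Lemma deg_sum i : #|nbhd R i| = \sum_s #|Ns i s|.
Proof.
rewrite -sum1_card (partition_big q xpredT) //=.
apply: eq_bigr => s _; rewrite -sum1_card; apply: eq_bigl => j.
by rewrite !inE.
Qed.

Hypothesis Hdiv : k %| r.

Lemma deg_bound i : #|nbhd R i| + 2 * (r %/ k) <= r + \sum_s wt i s.
Proof.
have Er : \sum_(s : 'I_(r %/ k)) k = r.
  by rewrite sum_nat_const card_ord divnK.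
have E2 : \sum_(s : 'I_(r %/ k)) 2 = 2 * (r %/ k).
  by rewrite sum_nat_const card_ord mulnC.
rewrite deg_sum -E2 -[X in _ <= X + _]Er -!big_split /=; apply: leq_sum => s _.
rewrite /wt; case: (boolP (full i s)) => Hf.
  by rewrite full_card //=; lia.
have := notfull_card Hf; rewrite /=.
case: (leqP k.-1 #|Ns i s|) => /= H1 H2; lia.
Qed.

Let D := Darc R q.

Lemma reach_full i s : full i s -> forall j, q j = s -> D i j.
Proof.
move=> /forallP Hf j Hj; have Rij : R i j by apply: (implyP (Hf j)); rewrite Hj.
rewrite /D /Darc; apply/andP; split.
  by apply: contraTneq Rij => ->; case: HR => _ ->.
apply/subsetP => j'; rewrite !inE => /andP[_ /eqP Hq].
by apply: (implyP (Hf j')); rewrite Hq Hj.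
Qed.

Lemma reach_near i s : k.-1 <= #|Ns i s| -> exists j, q j = s /\ connect D i j.
Proof.
move=> Hc; case: (boolP (full i s)) => Hf.
  have : 0 < #|Kc s| by rewrite cardK; lia.
  case/card_gt0P => j; rewrite inE => /eqP Hj.
  by exists j; split => //; apply: connect1; apply: reach_full Hf _ Hj.
move: (Hf) => /forallPn[j0]; rewrite negb_imply => /andP[/eqP Hq Hr].
exists j0; split => //.
case: (eqVneq i j0) => [->|Hij]; first exact: connect0.
apply: connect1; rewrite /D /Darc Hij /=.
apply/subsetP => j'; rewrite !inE => /andP[Hj' /eqP Hqj].
apply/negPn/negP => Hr'.
have Hsub : Ns i s \subset Kc s :\: [set j0; j'].
  apply/subsetP => j; rewrite !inE => /andP[Hij2 ->]; rewrite andbT.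
  by apply/norP; split; apply: contraTneq Hij2 => ->.
move/subset_leq_card: Hsub; rewrite cardsD.
have -> : Kc s :&: [set j0; j'] = [set j0; j'].
  apply/setIidPr/subsetP => j; rewrite !inE => /orP[]/eqP->; rewrite ?Hqj Hq //.
rewrite cards2 eq_sym Hj' cardK => H; lia.
Qed.

Lemma meet_or_wt u v :
  (exists w, connect D u w && connect D v w) \/
  (\sum_s (wt u s + wt v s) <= 2 * (r %/ k)).
Proof.
case: (boolP [exists w, connect D u w && connect D v w]) => [/existsP H|H]; first by left.
right; move/existsPn: H => H.
have -> : 2 * (r %/ k) = \sum_(s : 'I_(r %/ k)) 2.
  by rewrite sum_nat_const card_ord mulnC.
apply: leq_sum => s _.
have key : forall a b, full a s -> k.-1 <= #|Ns b s| ->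
    exists w, connect D a w && connect D b w.
  move=> a b Hfa Hnb; case: (reach_near Hnb) => j [Hj Cb].
  by exists j; rewrite Cb andbT; apply: connect1; apply: reach_full Hfa _ Hj.
have fn : forall a, full a s -> k.-1 <= #|Ns a s|.
  by move=> a Ha; rewrite full_card //; lia.
have k1 : full u s -> k.-1 <= #|Ns v s| -> False.
  move=> Hfa Hnb; have [w /andP[Ha Hb]] := key u v Hfa Hnb.
  by apply: (negP (H w)); apply/andP.
have k2 : full v s -> k.-1 <= #|Ns u s| -> False.
  move=> Hfa Hnb; have [w /andP[Ha Hb]] := key v u Hfa Hnb.
  by apply: (negP (H w)); apply/andP.
have f1 := fn u; have f2 := fn v.
rewrite /wt; move: k1 k2 f1 f2.
case: (full u s); case: (full v s); case: (_ <= #|Ns u s|); case: (_ <= #|Ns v s|) => //=.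
all: try by move=> H1; case: H1.
all: try by move=> _ H1; case: H1.
all: try by move=> _ _ H1; have := H1 isT.
all: try by move=> _ _ _ H1; have := H1 isT.
Qed.

Lemma wt_full i : \sum_s wt i s <= r %/ k + #|[set s | full i s]|.
Proof.
have E : \sum_(s : 'I_(r %/ k)) 1 = r %/ k by rewrite sum_nat_const card_ord muln1.
rewrite -[X in _ <= X + _]E -sum1_card [X in _ + X]big_mkcond /= -big_split /=; apply: leq_sum => s _.
rewrite /wt inE; case: (full i s); case: (k.-1 <= _) => //.
Qed.

End NatPart.

Local Open Scope ring_scope.

Theorem claim5p2 (F : realFieldType) (k r : nat) (eps : F)
    (R : rel 'I_r) (q : 'I_r -> 'I_(r %/ k)) :
  (2 <= k)%N -> 0 < eps -> (k %| r)%N -> 6 / eps <= r%:R ->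
  simple_graph R ->
  (forall i : 'I_r, (1 - k%:R^-1 + eps) * r%:R <= #|nbhd R i|%:R) ->
  @is_Kk_factor r k R q ->
  exists s1 s2 : 'I_(r %/ k), s1 != s2 /\
    (forall s, s \in [:: s1; s2] ->
       forall j : 'I_r, q j = s ->
       forall i : 'I_r, i != j -> connect (Darc R q) i j).
Proof.
move=> Hk Heps Hdiv Hr HR Hdeg HQ.
have Hx : 6 <= eps * r%:R by rewrite mulrC -ler_pdivrMr.
have Er : r%:R = (r %/ k)%:R * k%:R :> F by rewrite -natrM divnK.
have k0 : k%:R != 0 :> F by rewrite pnatr_eq0 -lt0n; lia.
have Wlb : forall i, (r %/ k)%:R + eps * r%:R <= (\sum_s wt R q i s)%:R.
  move=> i; have := deg_bound Hk HQ Hdiv i; rewrite -(ler_nat F) !natrD.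
  have := Hdeg i.
  have -> : (1 - k%:R^-1 + eps) * r%:R = r%:R - (r %/ k)%:R + eps * r%:R.
    by rewrite Er; field.
  move: (eps * r%:R) (#|nbhd R i|%:R : F) (r%:R : F) ((r %/ k)%:R : F)
    ((\sum_s wt R q i s)%:R : F) => x d rr m W; lra.
have meet : forall u v, exists w, connect (Darc R q) u w && connect (Darc R q) v w.
  move=> u v; case: (meet_or_wt Hk HR HQ Hdiv u v) => // H.
  exfalso; move: H; rewrite big_split /= -(ler_nat F) !natrD.
  have := Wlb u; have := Wlb v.
  move: (eps * r%:R) Hx ((r %/ k)%:R : F) ((\sum_s wt R q u s)%:R : F)
    ((\sum_s wt R q v s)%:R : F) => x Hx' m Wu Wv; lra.
have r0 : (0 < r)%N.
  rewrite -(ltr0n F); apply: lt_le_trans Hr; rewrite divr_gt0 //.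
set Reach := fun v => [set j | connect (Darc R q) v j].
have exP : exists n, [exists v, #|Reach v| == n].
  by exists #|Reach (Ordinal r0)|; apply/existsP; exists (Ordinal r0).
case: (ex_minnP exP) => n /existsP [v /eqP Hv] Hmin.
have Hsub : forall u, Reach v \subset Reach u.
  move=> u; have [w /andP[Cu Cv]] := meet u v.
  have S1 : Reach w \subset Reach v.
    by apply/subsetP => j; rewrite !inE; apply: connect_trans.
  have S2 : Reach w \subset Reach u.
    by apply/subsetP => j; rewrite !inE; apply: connect_trans.
  have Hc : (#|Reach v| <= #|Reach w|)%N.
    by rewrite Hv; apply: Hmin; apply/existsP; exists w.
  have E : Reach w = Reach v by apply/eqP; rewrite eqEcard S1.
  by rewrite -E.
have H6 : (6 <= #|[set s | full R q v s]|)%N.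
  have := wt_full R q v; rewrite -(ler_nat F) natrD => H.
  rewrite -(ler_nat F); have := le_trans (Wlb v) H; rewrite lerD2l => Hxc.
  exact: le_trans Hx Hxc.
have : (0 < #|[set s | full R q v s]|)%N by lia.
case/card_gt0P => s1 Hs1.
have : (0 < #|[set s | full R q v s] :\ s1|)%N.
  by have := cardsD1 s1 [set s | full R q v s]; rewrite Hs1; lia.
case/card_gt0P => s2; rewrite !inE => /andP[Hs21 Hs2].
exists s1, s2; split; first by rewrite eq_sym.
move=> s; rewrite !inE => Hs j Hj i Hij.
have Hf : full R q v s by case/orP: Hs => /eqP ->; [move: Hs1; rewrite inE | ].
have Dvj := reach_full HR Hf Hj.
have : j \in Reach v by rewrite inE; apply: connect1.
by move/(subsetP (Hsub i)); rewrite inE.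
Qed.
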